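(* Let $S=\{1,\ldots,n\}$, $\boldsymbol{P}(S)$ the set of partitions of $S$, and $\varrho(\mathcal{B})\ge0$ for $\mathcal{B}\in\boldsymbol{P}(S)$. Consider curves $a_t=\sum_{\mathcal{A}\in\boldsymbol{P}(S)}a_t(\mathcal{A})\,\mathcal{A}\in\mathbb{R}^{\boldsymbol{P}(S)}$ with initial value $a_0(\underline{1})=1$ and $a_0(\mathcal{A})=0$ for $\mathcal{A}\ne\underline 1$, where $\underline 1=\{S\}$. Then $a_t$ solves the system \[ \dot{a}_t = -\sum_{\mathcal{A}} \sum_{\mathcal{B}} \varrho(\mathcal{B})\, a_t(\mathcal{A})\, \mathcal{A} + \sum_{\mathcal{A}} \sum_{\mathcal{B} \succcurlyeq \mathcal{A}} \Bigg ( \prod_{i=1}^{|\mathcal{B}|}\sum_{\substack{\mathcal{C} \in \boldsymbol{P}(S) \\ \mathcal{C}|_{B_i} = \mathcal{A}|_{B_i}}} a_t(\mathcal{C}) \Bigg) \varrho (\mathcal{B})\, \mathcal{A} \] if and only if it solves the law of mass action of the chemical reaction network on species set $\boldsymbol{P}(S)$ consisting of the reactions \[ \sum_{j=1}^{|\mathcal{C}|}\mathcal{A}_j\xrightarrow{\ \varrho(\mathcal{C})/|\mathcal{C}|\ }\sum_{j=1}^{|\mathcal{C}|}\bigcup_{i=1}^{|\mathcal{C}|}\mathcal{A}_{i+j-1}|_{C_i}, \] one for every $\mathcal{C}=\{C_1,\ldots,C_{|\mathcal{C}|}\}\in\boldsymbol{P}(S)$ and every tuple $(\mathcal{A}_1,\ldots,\mathcal{A}_{|\mathcal{C}|})\in\boldsymbol{P}(S)^{|\mathcal{C}|}$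 (indices mod $|\mathcal{C}|$), namely \[ \dot{a}_t = \sum_{\mathcal{C}} \sum_{\mathcal{A}_1,\ldots,\mathcal{A}_{|\mathcal{C}|}} \frac{\varrho(\mathcal{C})}{|\mathcal{C}|}\, a_t (\mathcal{A}_1) \cdots a_t(\mathcal{A}_{|\mathcal{C}|}) \sum_{j = 1}^{|\mathcal{C}|} \Big ( \bigcup_{i=1}^{|\mathcal{C}|} \mathcal{A}_{i + j - 1}|_{C_i}- \mathcal{A}_j \Big ), \] all sums running over $\boldsymbol{P}(S)$.
   Context: A partition of $S$ is a set of pairwise disjoint nonempty blocks with union $S$; blocks of $\mathcal{B}$ are enumerated $B_1,\ldots,B_{|\mathcal{B}|}$ so that $B_1\ni1$ and $B_k$ contains the smallest element not in $B_1\cup\cdots\cup B_{k-1}$. $\mathcal{A}\preccurlyeq\mathcal{B}$ (equivalently $\mathcal{B}\succcurlyeq\mathcal{A}$) means every block of $\mathcal{A}$ is contained in a block of $\mathcal{B}$. For $U\subseteq S$, $\mathcal{A}|_U=\{A\cap U:A\in\mathcal{A}\}\setminus\{\varnothing\}$; a union $\bigcup_i\mathcal{A}_{i+j-1}|_{C_i}$ of partitions of the disjoint blocks $C_i$ is a partition of $S$. Vectors in $\mathbb{R}^{\boldsymbol{P}(S)}$ are formal sums with each partition identified with a standard basis vector. The law of mass action of a network of reactions $r_1+\cdots+r_m\xrightarrow{\kappa}s_1+\cdots+s_m$ is $\dot c_t=\sum\kappa\,c_t(r_1)\cdots c_t(r_m)(s_1+\cdots+s_m-r_1-\cdots-r_m)$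 summed over all reactions. *)

(* Defs.v *)
From HB Require Import structures.
From mathcomp Require Import all_boot all_order all_algebra.
Set Implicit Arguments. Unset Strict Implicit. Unset Printing Implicit Defensive.
Import Order.TTheory GRing.Theory Num.Theory.
Local Open Scope ring_scope.

(* S = {1,...,n} is modelled by 'I_n = {0,...,n-1}. *)
Notation Part n := {P : {set {set 'I_n}} | partition P [set: 'I_n]}.

(* the discrete partition (only used as an irrelevant default value) *)
Definition discrete_part (n : nat) : Part n :=
  exist _ (preim_partition (@id 'I_n) [set: 'I_n]) (preim_partitionP _ _).

Definition one_part_set n : {set {set 'I_n}} := [set [set: 'I_n]].

Definition restr n (A : {set {set 'I_n}}) (U : {set 'I_n}) : {set {set 'I_n}} :=
  [set X :&: U | X in A] :\ set0.

Definition refines n (A B : Part n) : bool :=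
  [forall X in val A, exists Y in val B, X \subset Y].

Definition minb n (X : {set 'I_n}) : nat := \big[minn/n]_(i in X) (val i).

(* the blocks B_1, ..., B_|B| of B, enumerated by increasing smallest element *)
Definition blocks n (B : Part n) : seq {set 'I_n} :=
  sort (fun X Y => (minb X <= minb Y)%N) (enum (val B)).

(* C_i  (0-based: i = 0, ..., |C|-1) *)
Definition blk n (C : Part n) (i : nat) : {set 'I_n} := nth set0 (blocks C) i.

Lemma cyc_proof k (i j : 'I_k) : ((i + j) %% k < k)%N.
Proof. apply: ltn_pmod; exact: leq_ltn_trans (leq0n i) (ltn_ord i). Qed.
Definition cyc k (i j : 'I_k) : 'I_k := Ordinal (cyc_proof i j).

(* bigcup_{i=1}^{|C|} A_{i+j-1}|_{C_i}  (0-based: A_{(i+j) mod |C|}) *)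
Definition glue_set n (C : Part n) (A : {ffun 'I_#|val C| -> Part n})
    (j : 'I_#|val C|) : {set {set 'I_n}} :=
  \bigcup_(i < #|val C|) restr (val (A (cyc i j))) (blk C i).
Arguments glue_set {n} C A j.

(* the same, as an element of P(S) (it is always a partition of S) *)
Definition glue n (C : Part n) (A : {ffun 'I_#|val C| -> Part n})
    (j : 'I_#|val C|) : Part n :=
  insubd (discrete_part n) (glue_set C A j).
Arguments glue {n} C A j.

Record reaction (T : Type) (R : Type) :=
  Reaction { reactants : seq T; products : seq T; rate : R }.

Definition mass_action (T : eqType) (R : pzRingType) (net : seq (reaction T R))
    (c : T -> R) (x : T) : R :=
  \sum_(r <- net) rate r * \prod_(y <- reactants r) c y *
     ((count_mem x (products r))%:R - (count_mem x (reactants r))%:R).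

Definition frag_reaction (R : fieldType) n (rho : Part n -> R) (C : Part n)
    (A : {ffun 'I_#|val C| -> Part n}) : reaction (Part n) R :=
  Reaction [seq A j | j <- enum 'I_#|val C|]
           [seq glue C A j | j <- enum 'I_#|val C|]
           (rho C / (#|val C|)%:R).
Arguments frag_reaction {R n} rho C A.

Definition frag_network (R : fieldType) n (rho : Part n -> R) :
    seq (reaction (Part n) R) :=
  flatten [seq [seq frag_reaction rho C A | A <- enum {ffun 'I_#|val C| -> Part n}]
          | C <- enum {: Part n}].

Definition frag_rhs (R : fieldType) n (rho : Part n -> R) (c : Part n -> R)
    (A : Part n) : R :=
  - (\sum_(B : Part n) rho B * c A)
  + \sum_(B : Part n | refines A B)
      (\prod_(X in val B) \sum_(C : Part n | restr (val C) X == restr (val A) X) c C)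
      * rho B.

From mathcomp Require Import all_classical all_reals all_analysis.

(* a solves dot a_t = F(a_t) for t > 0 (curves defined on [0, +oo)) *)
Definition solves (R : realType) (T : Type) (F : (T -> R) -> T -> R)
    (a : R -> T -> R) : Prop :=
  forall t : R, 0 < t -> forall A : T,
    derivable (fun s => a s A) t 1 /\ 'D_1 (fun s => a s A) t = F (a t) A.

(* Main.v *)
Require Import Defs.
From HB Require Import structures.
From mathcomp Require Import all_boot all_order all_algebra.
From mathcomp Require Import all_classical all_reals all_analysis.
From mathcomp Require Import ring lra.
Import Order.TTheory GRing.Theory Num.Theory.
Import numFieldNormedType.Exports.
Local Open Scope ring_scope.

Local Notation set0 := (@finset.set0 _).
Section Comb.
Variable n : nat.
Implicit Types (P Q x : Part n).

Lemma part_nonempty P X : X \in val P -> X != set0.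
Proof.
move=> XP; have /and3P[_ _ h] := valP P.
by apply: contraNneq h => <-.
Qed.

Lemma part_cover P (v : 'I_n) : exists2 X, X \in val P & v \in X.
Proof.
have /and3P[/eqP hc _ _] := valP P.
have : v \in finset.cover (val P) by rewrite hc inE.
by move=> /bigcupP[X XP vX]; exists X.
Qed.

Lemma part_uniq P X Y (v : 'I_n) :
  X \in val P -> Y \in val P -> v \in X -> v \in Y -> X = Y.
Proof.
have /and3P[_ ht _] := valP P.
by move=> XP YP vX vY; rewrite -(def_pblock ht XP vX) (def_pblock ht YP vY).
Qed.

Arguments part_uniq {P X Y v}.
Arguments part_nonempty {P X}.

Lemma restrP (A : {set {set 'I_n}}) U Z :
  reflect (Z != set0 /\ exists2 X, X \in A & Z = X :&: U) (Z \in restr A U).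
Proof.
rewrite /restr in_setD1; apply: (iffP andP).
  case=> Z0 H; case/imsetP: H => X XA EZ; split => //; exact: (ex_intro2 _ _ X XA EZ).
case=> Z0 [X XA EZ]; split => //. rewrite EZ. exact: (@imset_f _ _ (fun X => X :&: U)).
Qed.

Lemma size_blocks P : size (blocks P) = #|val P|.
Proof. by rewrite /blocks size_sort cardE. Qed.

Lemma mem_blocks P X : (X \in blocks P) = (X \in val P).
Proof. by rewrite /blocks mem_sort mem_enum. Qed.

Lemma uniq_blocks P : uniq (blocks P).
Proof. by rewrite /blocks sort_uniq enum_uniq. Qed.

Lemma blk_mem P (i : 'I_#|val P|) : blk P i \in val P.
Proof. by rewrite /blk -mem_blocks mem_nth // size_blocks. Qed.

Arguments blk_mem {P}.

Lemma blk_inj P : injective (fun i : 'I_#|val P| => blk P i).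
Proof.
move=> i j /eqP; rewrite /blk nth_uniq ?size_blocks ?uniq_blocks //.
by move/eqP/val_inj.
Qed.

Arguments blk_inj {P}.

Lemma blk_surj P X : X \in val P -> exists i : 'I_#|val P|, blk P i = X.
Proof.
rewrite -mem_blocks => XP.
have hi : (index X (blocks P) < #|val P|)%N by rewrite -size_blocks index_mem.
by exists (Ordinal hi); rewrite /blk nth_index.
Qed.

Arguments blk_surj {P X}.

Lemma big_blk (T : Type) (idx : T) (op : Monoid.com_law idx) P (f : {set 'I_n} -> T) :
  \big[op/idx]_(i < #|val P|) f (blk P i) = \big[op/idx]_(X in val P) f X.
Proof.
transitivity (\big[op/idx]_(X <- blocks P) f X).
  by rewrite (big_nth set0) size_blocks big_mkord.
rewrite (perm_big (enum (val P))) ?big_enum //.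
by rewrite /blocks perm_sort.
Qed.

Lemma card_part_gt0 P : (0 < n)%N -> (0 < #|val P|)%N.
Proof.
move=> hn; have [X XP _] := part_cover P (Ordinal hn).
by apply/card_gt0P; exists X.
Qed.

Lemma refinesP x P :
  reflect (forall X, X \in val x -> exists2 Y, Y \in val P & X \subset Y)
          (refines x P).
Proof.
apply: (iffP forallP) => [h X Xx|h X].
  by have /implyP/(_ Xx)/existsP[Y /andP[YP XY]] := h X; exists Y.
apply/implyP => Xx; have [Y YP XY] := h X Xx.
by apply/existsP; exists Y; rewrite YP XY.
Qed.

Definition gset P (F : 'I_#|val P| -> Part n) : {set {set 'I_n}} :=
  \bigcup_(i < #|val P|) restr (val (F i)) (blk P i).

Lemma gsetP P (F : 'I_#|val P| -> Part n) Z :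
  reflect (exists i, Z \in restr (val (F i)) (blk P i)) (Z \in gset P F).
Proof.
apply: (iffP bigcupP) => [[i _ h]|[i h]]; by exists i.
Qed.

Lemma gset_partition P (F : 'I_#|val P| -> Part n) : finset.partition (gset P F) [set: 'I_n].
Proof.
apply/and3P; split.
- apply/eqP/setP => v; rewrite inE.
  have [X XC vX] := part_cover P v.
  have [i Ei] := @blk_surj P X XC; subst X.
  have [Y YF vY] := part_cover (F i) v.
  apply/bigcupP; exists (Y :&: blk P i); last by rewrite inE vY vX.
  apply/gsetP; exists i; apply/restrP; split; last by exists Y.
  by apply/set0Pn; exists v; rewrite inE vY vX.
- apply/finset.trivIsetP => Z1 Z2 /gsetP[i1 /restrP[_ [Y1 Y1F E1]]].
  move=> /gsetP[i2 /restrP[_ [Y2 Y2F E2]]] neq.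
  rewrite -setI_eq0; apply/eqP/setP => v; rewrite inE [RHS]inE.
  apply/negP => /andP[]; rewrite E1 E2 !inE => /andP[vY1 vC1] /andP[vY2 vC2].
  have e := part_uniq (@blk_mem P i1) (@blk_mem P i2) vC1 vC2.
  have ei := @blk_inj P _ _ e; subst i2.
  have eY := part_uniq Y1F Y2F vY1 vY2; subst Y2.
  by move: neq; rewrite E1 E2 eqxx.
- by apply/gsetP => -[i /restrP[]]; rewrite eqxx.
Qed.

Lemma gset_eq P (F : 'I_#|val P| -> Part n) x :
  (insubd (discrete_part n) (gset P F) == x) =
  refines x P && [forall i, restr (val (F i)) (blk P i) == restr (val x) (blk P i)].
Proof.
rewrite -val_eqE val_insubd gset_partition.
apply/eqP/andP => [E|[/refinesP hr /forallP hF]].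
  split.
    apply/refinesP => Z; rewrite -E => /gsetP[i /restrP[_ [Y _ ->]]].
    by exists (blk P i); rewrite ?(@blk_mem P) ?finset.subsetIr.
  apply/forallP => i; apply/eqP/setP => W; rewrite -E.
  apply/idP/idP.
    move=> /restrP[W0 [Y YF EW]]; apply/restrP; split => //.
    exists W; last by rewrite EW -finset.setIA finset.setIid.
    by apply/gsetP; exists i; apply/restrP; split => //; exists Y.
  move=> /restrP[W0 [Z /gsetP[i' /restrP[_ [Y YF EZ]]] EW]].
  have [v vW] := set0Pn _ W0; rewrite EW EZ !inE in vW.
  case/andP: vW => /andP[vY vC'] vC.
  have e := part_uniq (@blk_mem P i') (@blk_mem P i) vC' vC.
  have ei := @blk_inj P _ _ e; subst i'.
  apply/restrP; split => //; exists Y => //.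
  by rewrite EW EZ -finset.setIA finset.setIid.
apply/setP => Z; apply/gsetP/idP => [[i]|Zx].
  rewrite (eqP (hF i)) => /restrP[Z0 [Y Yx EZ]].
  have [X XP YX] := hr Y Yx.
  have [v vZ] := set0Pn _ Z0; rewrite EZ inE in vZ; case/andP: vZ => vY vC.
  have e := part_uniq XP (@blk_mem P i) (fintype.subsetP YX v vY) vC; subst X.
  by rewrite EZ (finset.setIidPl YX).
have [X XP ZX] := hr Z Zx.
have [i Ei] := @blk_surj P X XP; subst X.
exists i; rewrite (eqP (hF i)); apply/restrP; split.
  exact: part_nonempty Zx.
by exists Z => //; rewrite (finset.setIidPl ZX).
Qed.

End Comb.
Section Gen.
Variable R : comPzRingType.

Lemma sum_count_memR (T : finType) (s : seq T) :
  \sum_(x : T) (count_mem x s)%:R = (size s)%:R :> R.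
Proof.
elim: s => [|y s IH] /=; first by rewrite big1.
rewrite -[(size s).+1]add1n natrD -IH.
under eq_bigr do rewrite natrD.
rewrite big_split /=; congr (_ + _).
rewrite (bigD1 y) //= eqxx big1 ?addr0 // => z /negbTE.
by rewrite eq_sym => ->.
Qed.

Lemma count_enum_map (I : finType) (T : eqType) (f : I -> T) (x : T) :
  (count_mem x [seq f j | j <- enum I])%:R = \sum_j (f j == x)%:R :> R.
Proof.
rewrite count_map -sum1_count natr_sum big_enum_cond /= big_mkcond /=.
by apply: eq_bigr => j _; case: ifP.
Qed.

Lemma prod_bool (I : finType) (P : pred I) :
  \prod_i (P i)%:R = [forall i, P i]%:R :> R.
Proof.
case: (boolP [forall i, P i]) => [/forallP h|/forallPn [i Pi]].
  by rewrite big1 // => i _; rewrite h.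
by rewrite (bigD1 i) //= (negbTE Pi) mul0r.
Qed.

Lemma sum_ffun_ind (I T : finType) (c : T -> R) (j0 : I) (x : T) :
  \sum_(A : {ffun I -> T}) (\prod_j c (A j)) * (A j0 == x)%:R
   = c x * (\sum_y c y) ^+ #|I|.-1.
Proof.
pose F i y := c y * (if i == j0 then (y == x)%:R else 1).
transitivity (\sum_(A : {ffun I -> T}) \prod_i F i (A i)).
  apply: eq_bigr => A _; rewrite (bigD1 j0) //= [RHS](bigD1 j0) //= /F eqxx.
  rewrite -mulrA [_ * (_ == x)%:R]mulrC mulrA; congr (_ * _).
  by apply: eq_bigr => i /negbTE ->; rewrite mulr1.
rewrite -bigA_distr_bigA (bigD1 j0) //= /F eqxx.
congr (_ * _).
  rewrite (bigD1 x) //= eqxx mulr1 big1 ?addr0 // => y /negbTE ->.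
  by rewrite mulr0.
under eq_bigr => i /negbTE -> do under eq_bigr do rewrite mulr1.
by rewrite prodr_const cardC1.
Qed.

End Gen.
Arguments sum_count_memR {R T}.
Arguments count_enum_map {R I T}.
Arguments prod_bool {R I}.
Arguments sum_ffun_ind {R I T}.

Lemma cyc_inj k (j0 : 'I_k) : injective (fun i : 'I_k => cyc i j0).
Proof.
move=> i i' /(congr1 val) /= /eqP.
rewrite eqn_modDr !modn_small ?ltn_ord // => /eqP.
exact: val_inj.
Qed.

Section T1.
Variable R : comPzRingType.
Variable n : nat.

Definition Gp (C : Part n) (c : Part n -> R) (x : Part n) : R :=
  \prod_(X in val C) \sum_(y : Part n | restr (val y) X == restr (val x) X) c y.

Lemma term1 (C : Part n) (c : Part n -> R) (x : Part n) (j0 : 'I_#|val C|) :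
  \sum_(A : {ffun 'I_#|val C| -> Part n}) (\prod_j c (A j)) * (Defs.glue C A j0 == x)%:R
  = (refines x C)%:R * Gp C c x.
Proof.
set k := #|val C|.
pose s := fun i : 'I_k => cyc i j0.
have sinj : injective s := @cyc_inj k j0.
pose Q (i : 'I_k) (y : Part n) := restr (val y) (blk C i) == restr (val x) (blk C i).
pose H (i : 'I_k) (y : Part n) := c y * (Q i y)%:R.
transitivity (\sum_(A : {ffun 'I_k -> Part n})
                (refines x C)%:R * \prod_i H i (A (s i))).
  apply: eq_bigr => A _.
  rewrite /Defs.glue [_ == x]gset_eq -mulnb natrM -prod_bool mulrCA; congr (_ * _).
  by rewrite (reindex_inj sinj) -big_split.
rewrite -mulr_sumr; congr (_ * _).
pose h (A : {ffun 'I_k -> Part n}) : {ffun 'I_k -> Part n} := [ffun i => A (s i)].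
have hinj : injective h.
  move=> A B /ffunP hAB; apply/ffunP => j.
  have [i ->] := codomP (injF_onto sinj j).
  by have := hAB i; rewrite !ffunE.
transitivity (\sum_(A : {ffun 'I_k -> Part n}) \prod_i H i (A i)).
  rewrite [RHS](reindex_inj hinj) /=; apply: eq_bigr => A _.
  by apply: eq_bigr => i _; rewrite ffunE.
rewrite -bigA_distr_bigA /Gp -big_blk.
apply: eq_bigr => i _; rewrite [RHS]big_mkcond /=.
by apply: eq_bigr => y _; rewrite /H /Q; case: ifP; rewrite ?mulr1 ?mulr0.
Qed.

End T1.
Arguments Gp {R n}.
Arguments term1 {R n}.

Section Mass.
Variable R : numFieldType.
Variable n : nat.
Hypothesis hn : (0 < n)%N.
Variable rho : Part n -> R.

Lemma mass_unfold (c : Part n -> R) (x : Part n) :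
  mass_action (frag_network rho) c x =
  \sum_(C : Part n) \sum_(A : {ffun 'I_#|val C| -> Part n})
     rho C / (#|val C|)%:R * \prod_j c (A j) *
     (\sum_j (Defs.glue C A j == x)%:R - \sum_j (A j == x)%:R).
Proof.
rewrite /mass_action /frag_network big_flatten /= big_map big_enum /=.
apply: eq_bigr => C _; rewrite big_map (big_enum _ _ {ffun 'I_#|val C| -> Part n}) /=.
apply: eq_bigr => A _ /=.
by rewrite !count_enum_map big_map big_enum.
Qed.

Lemma aux_field (r g m : R) (k : nat) : k%:R != 0 :> R ->
  (r / k%:R * g) *+ k - (r / k%:R * m) *+ k = r * (g - m).
Proof. by move=> k0; rewrite -mulrnBl -mulrBr -mulrnAl -[(r / _) *+ k]mulr_natr divfK. Qed.

Lemma mass_C (c : Part n -> R) (x : Part n) (C : Part n) :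
  \sum_(A : {ffun 'I_#|val C| -> Part n})
     rho C / (#|val C|)%:R * \prod_j c (A j) *
     (\sum_j (Defs.glue C A j == x)%:R - \sum_j (A j == x)%:R)
  = rho C * ((refines x C)%:R * Gp C c x - c x * (\sum_y c y) ^+ (#|val C|).-1).
Proof.
have k0 : (#|val C|)%:R != 0 :> R by rewrite pnatr_eq0 -lt0n (@card_part_gt0 n C hn).
set k := #|val C| in k0 *.
have E1 (j : 'I_k) : \sum_(A : {ffun 'I_k -> Part n})
    rho C / k%:R * \prod_j c (A j) * (Defs.glue C A j == x)%:R =
    rho C / k%:R * ((refines x C)%:R * Gp C c x).
  rewrite -(term1 C c x j) mulr_sumr; apply: eq_bigr => A _; by rewrite mulrA.
have E2 (j : 'I_k) : \sum_(A : {ffun 'I_k -> Part n})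
    rho C / k%:R * \prod_j c (A j) * (A j == x)%:R =
    rho C / k%:R * (c x * (\sum_y c y) ^+ #|'I_k|.-1).
  rewrite -(sum_ffun_ind c j x) mulr_sumr; apply: eq_bigr => A _; by rewrite mulrA.
under eq_bigr do rewrite mulrBr !mulr_sumr.
rewrite sumrB exchange_big [X in _ - X]exchange_big /=.
transitivity (\sum_(j < k) rho C / k%:R * ((refines x C)%:R * Gp C c x)
   - \sum_(j < k) rho C / k%:R * (c x * (\sum_y c y) ^+ #|'I_k|.-1)).
  by congr (_ - _); apply: eq_bigr => j _; [exact: E1 | exact: E2].
rewrite !sumr_const card_ord.
exact: aux_field.
Qed.

Lemma mass_sum0 (c : Part n -> R) :
  \sum_(x : Part n) mass_action (frag_network rho) c x = 0.
Proof.
rewrite /mass_action exchange_big /frag_network big_flatten /= big_map.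
rewrite big1 // => C _; rewrite big_map big1 // => A _ /=.
rewrite -mulr_sumr sumrB !sum_count_memR !size_map subrr mulr0 //.
Qed.

Lemma frag_mass (c : Part n -> R) (x : Part n) :
  frag_rhs rho c x = mass_action (frag_network rho) c x
    + c x * \sum_(C : Part n) rho C * ((\sum_y c y) ^+ (#|val C|).-1 - 1).
Proof.
rewrite mass_unfold.
rewrite (eq_bigr _ (fun C _ => mass_C c x C)).
rewrite /frag_rhs [\sum_(B | refines x B) _]big_mkcond /= mulr_sumr -sumrN -!big_split /=.
apply: eq_bigr => C _.
rewrite /Gp; move: (\prod_(X in val C) _) (c x) (rho C) ((\sum_y c y) ^+ _) => g a r p.
by case: (refines x C); rewrite /=; ring.
Qed.

End Mass.
Arguments frag_mass {R n} hn rho c x.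
Arguments mass_sum0 {R n} rho c.

Local Open Scope classical_set_scope.

Lemma gronwall0 (R : realType) (D g : R -> R) (T L : R) :
  0 < T -> 0 <= L ->
  {within `[0, T], continuous D} -> D 0 = 0 ->
  (forall t, 0 < t -> t < T -> is_derive t 1 D (D t * g t)) ->
  (forall t, 0 < t -> t < T -> `|g t| <= L) ->
  D T = 0.
Proof.
move=> T0 L0 cD D00 dD bg.
pose c := - (2 * L).
pose E := fun t : R => expR (c * t).
pose h := fun t => (D t * D t) * E t.
have dlin (t : R) : is_derive t 1 (fun s : R => c * s) c.
  have -> : (fun s : R => c * s) = c *: id by apply/funext => s.
  by apply: is_derive_eq; rewrite scaler1.
have dE (t : R) : is_derive t 1 E (expR (c * t) * c).
  exact: (@is_derive1_comp _ expR (fun t => c * t)).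
have dh (t : R) : 0 < t -> t < T ->
   is_derive t 1 h (2 * (D t * D t) * E t * (g t - L)).
  move=> t0 tT; have := dD t t0 tT => dDt.
  have -> : h = (D * D) * E by [].
  apply: is_derive_eq; rewrite /E /c.
  rewrite /GRing.scale /=.
  have -> : (D * D) t = D t * D t by []. ring.
have hle : h T <= h 0.
  apply: (@ler0_derive1_nincr _ h 0 T) => //.
  - move=> x; rewrite in_itv /= => /andP[x0 xT].
    by have [] := dh x x0 xT.
  - move=> x; rewrite in_itv /= => /andP[x0 xT].
    rewrite derive1E (@derive_val _ _ _ _ _ _ _ (dh x x0 xT)).
    rewrite mulr_ge0_le0 //.
      by rewrite mulr_ge0 ?expR_ge0 // mulr_ge0 // -expr2 sqr_ge0.
    by rewrite subr_le0 (le_trans (ler_norm _)) // bg.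
  - have cE : {within `[0, T], continuous E}.
      apply: continuous_subspaceT => x.
      apply: continuous_comp; last exact: continuous_expR.
      by apply: (@continuousM _ _ (cst c) id); [exact: cst_continuous|].
    move=> x; exact: (continuousM (continuousM (cD x) (cD x)) (cE x)).
  - exact: ltW.
have : h T = 0.
  apply/eqP; rewrite eq_le; apply/andP; split.
    by move: hle; rewrite /h D00 !mul0r.
  by rewrite /h mulr_ge0 ?expR_ge0 // -expr2 sqr_ge0.
rewrite /h => /eqP; rewrite mulf_eq0 expR_eq0 orbF mulf_eq0 orbb.
by move/eqP.
Qed.

Section An.
Variable R : realType.

Lemma cont_sum (T : topologicalType) (I : Type) (r : seq I) (f : I -> T -> R) :
  (forall i, continuous (f i)) -> continuous (fun x => \sum_(i <- r) f i x).
Proof.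
move=> cf; elim: r => [|i r IH].
  have -> : (fun x => \sum_(i <- [::]) f i x) = (fun=> 0) by apply/funext => y; rewrite big_nil.
  exact: cst_continuous.
have -> : (fun x => \sum_(j <- i :: r) f j x) = (fun x => f i x + \sum_(j <- r) f j x).
  by apply/funext => y; rewrite big_cons.
by move=> x; apply: continuousD; [exact: cf | exact: IH].
Qed.

Lemma cont_exp (T : topologicalType) (f : T -> R) (i : nat) :
  continuous f -> continuous (fun x => f x ^+ i).
Proof.
move=> cf; elim: i => [|i IH].
  have -> : (fun x => f x ^+ 0) = (fun=> 1) by apply/funext => y; rewrite expr0.
  exact: cst_continuous.
have -> : (fun x => f x ^+ i.+1) = (f \* (fun x => f x ^+ i))%R.
  by apply/funext => y; rewrite exprS.
by move=> x; apply: continuousM; [exact: cf | exact: IH].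
Qed.

Lemma is_derive_sumf (I : Type) (r : seq I) (f : I -> R -> R) (df : I -> R) (t : R) :
  (forall i, is_derive t 1 (f i) (df i)) ->
  is_derive t 1 (fun s => \sum_(i <- r) f i s) (\sum_(i <- r) df i).
Proof.
move=> hf; elim: r => [|i r IH].
  have -> : (fun s => \sum_(i <- [::]) f i s) = cst 0 by apply/funext => y; rewrite big_nil.
  by rewrite big_nil; exact: is_derive_cst.
have -> : (fun s => \sum_(j <- i :: r) f j s) = f i + (fun s => \sum_(j <- r) f j s).
  by apply/funext => y; rewrite big_cons.
by rewrite big_cons; apply: is_deriveD.
Qed.

Lemma ode_zero (D g : R -> R) :
  {within `[0, +oo[, continuous D} -> {within `[0, +oo[, continuous g} -> D 0 = 0 ->
  (forall t : R, 0 < t -> is_derive t 1 D (D t * g t)) ->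
  forall t : R, 0 < t -> D t = 0.
Proof.
move=> cD cg D00 dD T T0.
have sub : `[0, T] `<=` `[0, +oo[ by apply: subset_itvl; rewrite bnd_simp.
have cD' := continuous_subspaceW sub cD.
have cg' : {within `[0, T], continuous (fun t => `|g t|)}.
  move=> x; have h1 : {for x, continuous (from_subspace `[0, T] g)}.
    exact: (continuous_subspaceW sub cg).
  have h2 : {for g x, continuous (Num.norm : R -> R)} by exact: norm_continuous.
  exact: (continuous_comp h1 h2).
have [c cT hc] := EVT_max (ltW T0) cg'.
apply: (@gronwall0 R D g T `|g c|) => //.
  by move=> t t0 _; exact: dD.
by move=> t t0 tT; apply: hc; rewrite in_itv /= (ltW t0) (ltW tT).
Qed.

End An.
Arguments ode_zero {R}.

Lemma sum_frag_rhs (R : realType) (n : nat) (hn : (0 < n)%N) (rho : Part n -> R)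
  (c : Part n -> R) :
  \sum_(x : Part n) frag_rhs rho c x =
  ((\sum_y c y) - 1) *
  ((\sum_y c y) * \sum_(C : Part n) rho C * \sum_(i < (#|val C|).-1) (\sum_y c y) ^+ i).
Proof.
rewrite (eq_bigr _ (fun x _ => frag_mass hn rho c x)) big_split /= mass_sum0 add0r.
rewrite -mulr_suml.
under eq_bigr do rewrite subrX1 mulrCA.
rewrite -mulr_sumr.
move: (\sum_y c y) (\sum_(i : Part n) _) => m s.
by rewrite mulrCA.
Qed.

Theorem theorem6p1 (R : realType) (n : nat) (hn : (0 < n)%N)
  (rho : Part n -> R) (hrho : forall B, 0 <= rho B)
  (a : R -> Part n -> R)
  (hcont : forall A : Part n, {within `[0, +oo[, continuous (fun s => a s A)})
  (h0 : forall A : Part n,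
          a 0 A = (if val A == one_part_set n then 1 else 0)) :
  solves (frag_rhs rho) a <-> solves (mass_action (frag_network rho)) a.
Proof.
pose M (s : R) := \sum_(A : Part n) a s A.
pose D (s : R) := M s - 1.
have cM : {within `[0, +oo[, continuous M}.
  have h := @cont_sum R _ _ (index_enum (Part n))
            (fun A => from_subspace `[0, +oo[ (fun s => a s A)) hcont.
  exact h.
have cD : {within `[0, +oo[, continuous D}.
  move=> x; apply: (@continuousB _ _ _ (from_subspace _ M) (fun=> 1)).
    exact: cM.
  exact: cst_continuous.
have D00 : D 0 = 0.
  rewrite /D /M (eq_bigr _ (fun A _ => h0 A)).
  have p1 : finset.partition (one_part_set n) [set: 'I_n].
    rewrite /finset.partition /one_part_set cover1 finset.trivIset1 eqxx /=.
    rewrite !inE eq_sym; apply/set0Pn; exists (Ordinal hn); by rewrite inE.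
  pose A1 : Part n := exist (fun P => finset.partition P [set: 'I_n]) _ p1.
  rewrite (bigD1 A1) //= eqxx big1 ?addr0 ?subrr // => A neq.
  rewrite ifF //; apply: contraNF neq => /eqP e; apply/eqP/val_inj.
  exact: e.
have key : forall (F : (Part n -> R) -> Part n -> R) (g : R -> R),
    {within `[0, +oo[, continuous g} ->
    (forall t, 0 < t -> \sum_A F (a t) A = D t * g t) ->
    solves F a -> forall t, 0 < t -> M t = 1.
  move=> F g cg hF hs.
  have dD : forall t : R, 0 < t -> is_derive t 1 D (D t * g t).
    move=> u u0.
    have hA : forall A, is_derive u 1 (fun s => a s A) (F (a u) A).
      by move=> A; have [d <-] := hs u u0 A; exact: derivableP.
    have hS := @is_derive_sumf R _ (index_enum (Part n)) (fun A s => a s A) _ u hA.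
    have hB := is_deriveB hS (@is_derive_cst R R^o R^o (1 : R) u 1).
    apply: (is_derive_eq hB).
    by rewrite subr0 hF.
  move=> t t0; have := ode_zero D g cD cg D00 dD t t0.
  by move/eqP; rewrite /D subr_eq0 => /eqP.
have fm : forall t, M t = 1 -> forall A,
    frag_rhs rho (a t) A = mass_action (frag_network rho) (a t) A.
  move=> t Mt A; rewrite (frag_mass hn).
  have -> : \sum_y a t y = 1 by exact: Mt.
  by rewrite big1 ?mulr0 ?addr0 // => C _; rewrite expr1n subrr mulr0.
split => hs.
- pose g s := M s * \sum_(C : Part n) rho C * \sum_(i < (#|val C|).-1) M s ^+ i.
  have cg : {within `[0, +oo[, continuous g}.
    have cP : forall C : Part n,
        {within `[0, +oo[, continuous (fun s => \sum_(i < (#|val C|).-1) M s ^+ i)}.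
      move=> C; exact: (@cont_sum R _ _ (index_enum 'I_(#|val C|).-1)
         (fun i : 'I_(#|val C|).-1 => from_subspace `[0, +oo[ (fun s => M s ^+ i))
         (fun i : 'I_(#|val C|).-1 => @cont_exp R _ (from_subspace `[0, +oo[ M) i cM)).
    have cS : {within `[0, +oo[, continuous
        (fun s => \sum_(C : Part n) rho C * \sum_(i < (#|val C|).-1) M s ^+ i)}.
      exact: (@cont_sum R _ _ (index_enum _)
         (fun C => from_subspace `[0, +oo[
             (fun s => rho C * \sum_(i < (#|val C|).-1) M s ^+ i))
         (fun C x => continuousM (@cst_continuous _ _ (rho C) x) (cP C x))).
    move=> x; exact: (continuousM (cM x) (cS x)).
  have hF : forall t, 0 < t -> \sum_A frag_rhs rho (a t) A = D t * g t.
    by move=> t t0; rewrite sum_frag_rhs.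
  have Mt := key _ g cg hF hs.
  move=> t t0 A; have [d e] := hs t t0 A; split => //.
  by rewrite e (fm t (Mt t t0)).
- have hF : forall t, 0 < t ->
      \sum_A mass_action (frag_network rho) (a t) A = D t * (fun=> 0) t.
    by move=> t t0; rewrite mass_sum0 mulr0.
  have Mt := key _ _ (@cst_continuous _ _ 0) hF hs.
  move=> t t0 A; have [d e] := hs t t0 A; split => //.
  by rewrite e -(fm t (Mt t t0)).
Qed.
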